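(* Let $a_1,\ldots,a_k\ge 0$ and $d\in\mathbb{R}$, let $\mathbf{x}=[x_1,\ldots,x_k]^T\in\mathbb{R}^k$, and for $l=1,\ldots,k$ let $\mathbf{a}_l=[a_1,\ldots,a_l,0,\ldots,0]^T\in\mathbb{R}^k$. For $1\le l<k$ let $y_l=a_{l+1}\,\mathbf{a}_l^T\mathbf{x}-\|\mathbf{a}_l\|^2x_{l+1}$. If $\mathbf{a}_{l+1}^T\mathbf{x}>\tfrac12 d\|\mathbf{a}_{l+1}\|^2$ and $y_l>0$, then $\mathbf{a}_l^T\mathbf{x}>\tfrac12 d\|\mathbf{a}_l\|^2$. *)

(* Defs.v *)
From mathcomp Require Import all_boot all_order all_algebra.
Set Implicit Arguments. Unset Strict Implicit. Unset Printing Implicit Defensive.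
Import Order.TTheory GRing.Theory Num.Theory.
Local Open Scope ring_scope.

(* Vectors in R^k are functions 'I_k -> R; indices are 0-based:
   a_1..a_k of the paper are a 0 .. a (k-1). *)

Definition avec (R : ringType) (k : nat) (a : 'I_k -> R) (l : nat) : 'I_k -> R :=
  fun i => if (i < l)%N then a i else 0.

Definition dotv (R : ringType) (k : nat) (u v : 'I_k -> R) : R :=
  \sum_(i < k) u i * v i.

Definition sqnorm (R : ringType) (k : nat) (u : 'I_k -> R) : R := dotv u u.

(* Main.v *)
Require Import Defs.
From mathcomp Require Import all_boot all_order all_algebra.
From mathcomp Require Import ring lra.
Import Order.TTheory GRing.Theory Num.Theory.
Local Open Scope ring_scope.

Lemma split_sum (R : realFieldType) (k : nat) (l : nat) (Hl : (l < k)%N) (F : 'I_k -> R) :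
  \sum_(i < k) (if (i < l.+1)%N then F i else 0) =
  \sum_(i < k) (if (i < l)%N then F i else 0) + F (Ordinal Hl).
Proof.
rewrite (bigD1 (Ordinal Hl)) //= ltnSn [in RHS](bigD1 (Ordinal Hl)) //= ltnn add0r addrC.
congr (_ + _); apply: eq_bigr => i /eqP Hi.
rewrite ltnS leq_eqVlt; case: eqP => // E; exfalso; apply: Hi; exact: val_inj.
Qed.

Lemma mul_self_ge0 (R : realFieldType) (z : R) : 0 <= z * z.
Proof. by rewrite -expr2 sqr_ge0. Qed.

Theorem lemma2 (R : realFieldType) (k : nat) (a : 'I_k -> R) (d : R) (x : 'I_k -> R)
  (ha : forall i, 0 <= a i) (l : nat) (Hl1 : (1 <= l)%N) (Hl : (l < k)%N) :
  let y := a (Ordinal Hl) * dotv (avec a l) x - sqnorm (avec a l) * x (Ordinal Hl) in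
  dotv (avec a l.+1) x > d / 2 * sqnorm (avec a l.+1) ->
  y > 0 ->
  dotv (avec a l) x > d / 2 * sqnorm (avec a l).
Proof.
move=> y.
have E1 : dotv (avec a l.+1) x = dotv (avec a l) x + a (Ordinal Hl) * x (Ordinal Hl).
  rewrite /dotv /avec.
  transitivity (\sum_(i < k) (if (i < l.+1)%N then a i * x i else 0)).
    by apply: eq_bigr => i _; case: ifP => _; rewrite ?mul0r.
  rewrite (@split_sum R k l Hl (fun i => a i * x i)) /=; congr (_ + _).
  by apply: eq_bigr => i _; case: ifP => _; rewrite ?mul0r.
have E2 : sqnorm (avec a l.+1) = sqnorm (avec a l) + a (Ordinal Hl) * a (Ordinal Hl).
  rewrite /sqnorm /dotv /avec.
  transitivity (\sum_(i < k) (if (i < l.+1)%N then a i * a i else 0)).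
    by apply: eq_bigr => i _; case: ifP => _; rewrite ?mul0r.
  rewrite (@split_sum R k l Hl (fun i => a i * a i)) /=; congr (_ + _).
  by apply: eq_bigr => i _; case: ifP => _; rewrite ?mul0r.
rewrite E1 E2 /y.
set S := dotv (avec a l) x; set N := sqnorm (avec a l).
set al := a (Ordinal Hl); set xi := x (Ordinal Hl).
have a0 : 0 <= al by apply: ha.
move=> H1 H2.
have N0 : 0 <= N.
  rewrite /N /sqnorm /dotv; apply: sumr_ge0 => i _; exact: mul_self_ge0.
have P : 0 < N + al * al.
  have s0 := @mul_self_ge0 R al.
  case: (ltrgtP N 0) => hN; [lra | lra |].
  rewrite hN in H2 *; rewrite add0r.
  case: (ltrgtP al 0) => ha'; [lra | exact: mulr_gt0 |].
  rewrite ha' in H2; lra.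
have K : (S - d/2*N) * (N + al*al) = N * (S + al*xi - d/2*(N+al*al)) + al*(al*S - N*xi) by ring.
have K2 : 0 < (S - d/2*N) * (N + al*al).
  rewrite K.
  have h1 : 0 <= N * (S + al * xi - d / 2 * (N + al * al)) by apply: mulr_ge0 => //; lra.
  have h2 : 0 <= al * (al * S - N * xi) by apply: mulr_ge0 => //; lra.
  case: (ltrgtP N 0) => hN; first lra.
    have : 0 < N * (S + al * xi - d / 2 * (N + al * al)) by apply: mulr_gt0 => //; lra.
    lra.
  have hal : 0 < al.
    rewrite lt0r a0 andbT; apply/eqP => ha'; move: H2; rewrite ha' hN; lra.
  have : 0 < al * (al * S - N * xi) by apply: mulr_gt0 => //; lra.
  lra.
move: K2; rewrite pmulr_lgt0 //; lra.
Qed.
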